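(* Let $U:\mathbb R^m_{++}\to\mathbb R$ be a concave NDAS function and let $s^{opt}$ be a maximizer of $U$ over $B_s$. Let $w^0,w^1\in W$ have weighted centers $(x^0,y^0,s^0)$ and $(x^1,y^1,s^1)$, let $g^0,g^1$ be supergradients of $U$ at $s^0,s^1$, and set $g^{0w}=(Y^0)^{-1}g^0$, $g^{1w}=(Y^1)^{-1}g^1$. Then $$\{w:\ (g^{0w})^\top(w-w^0)\ge 0,\ (g^{1w})^\top(w-w^1)\ge 0\}\cap W_{s^{opt}}\neq\emptyset.$$
   Context: Let $A\in\mathbb R^{m\times n}$ have full column rank $n\le m$ and $b\in\mathbb R^m$ be such that $\{x:Ax\le b\}$ is bounded with nonempty interior. For $w\in\mathbb R^m_{++}$ the weighted center of $w$ is the unique $(x,y,s)$ with $Ax+s=b$, $s>0$, $A^\top y=0$, $\mathrm{Diag}(s)y=w$ ($s$-vector $s$, $y$-vector $y$). Capital letters denote diagonal matrices of vectors. $W=\{w\in\mathbb R^m:w>0,\ e^\top w=1\}$. Centric $s$-vectors are $s$-vectors of weighted centers of elements of $W$; $B_s$ is their set; for centric $s$, $W_s=\{w\in W:$ the $s$-vector of $w$ is $s\}$. Supergradient of concave $U$ at $s^0$: $g$ with $U(s)\le U(s^0)+g^\top(s-s^0)$ for all $s$. A function $f:\mathbb R^m_{++}\to\mathbb R$ is NDAS (non-decreasing under affine scaling) if for every $d\in\mathbb R^m_{++}$, with $D=\mathrm{Diag}(d)$: (1) $f(s)\le\max\{f(Ds),f(D^{-1}s)\}$ for all $s\in\mathbb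 R^m_{++}$; (2) if $f(s^0)\le f(Ds^0)$ for a single $s^0\in\mathbb R^m_{++}$, then $f(s)\le f(Ds)$ for all $s\in\mathbb R^m_{++}$. *)

(* Defs.v *)
(* classical reals. Vectors in R^k are functions nat -> R,
   of which only the coordinates 0..k-1 are meaningful; matrices are
   functions nat -> nat -> R. *)
From Stdlib Require Import Reals.
Open Scope R_scope.

Definition vec := nat -> R.
Definition mat := nat -> nat -> R.

Fixpoint sumR (k : nat) (f : nat -> R) : R :=
  match k with
  | O => 0
  | S k' => sumR k' f + f k'
  end.

Definition dot (k : nat) (u v : vec) : R := sumR k (fun i => u i * v i).

Definition matvec (n : nat) (A : mat) (x : vec) : vec :=
  fun i => sumR n (fun j => A i j * x j).

Definition tmatvec (m : nat) (A : mat) (y : vec) : vec :=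
  fun j => sumR m (fun i => A i j * y i).

Definition posvec (k : nat) (v : vec) : Prop := forall i, (i < k)%nat -> 0 < v i.

Definition full_column_rank (m n : nat) (A : mat) : Prop :=
  forall x : vec, (forall i, (i < m)%nat -> matvec n A x i = 0) ->
                  forall j, (j < n)%nat -> x j = 0.

Definition feasible (m n : nat) (A : mat) (b : vec) (x : vec) : Prop :=
  forall i, (i < m)%nat -> matvec n A x i <= b i.

Definition poly_bounded (m n : nat) (A : mat) (b : vec) : Prop :=
  exists M : R, forall x, feasible m n A b x -> forall j, (j < n)%nat -> Rabs (x j) <= M.

Definition poly_nonempty_interior (m n : nat) (A : mat) (b : vec) : Prop :=
  exists (x0 : vec) (eps : R), 0 < eps /\
    forall x, (forall j, (j < n)%nat -> Rabs (x j - x0 j) < eps) -> feasible m n A b x.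

Definition weighted_center (m n : nat) (A : mat) (b : vec) (w x y s : vec) : Prop :=
  (forall i, (i < m)%nat -> matvec n A x i + s i = b i) /\
  posvec m s /\
  (forall j, (j < n)%nat -> tmatvec m A y j = 0) /\
  (forall i, (i < m)%nat -> s i * y i = w i).

Definition inW (m : nat) (w : vec) : Prop := posvec m w /\ sumR m w = 1.

(* the s-vector of the weighted center of w is s
   (the weighted center is unique under the standing assumptions) *)
Definition s_vector_of (m n : nat) (A : mat) (b : vec) (w s : vec) : Prop :=
  exists x y, weighted_center m n A b w x y s.

Definition centric (m n : nat) (A : mat) (b : vec) (s : vec) : Prop :=
  exists w, inW m w /\ s_vector_of m n A b w s.

Definition inWs (m n : nat) (A : mat) (b : vec) (s w : vec) : Prop :=
  inW m w /\ s_vector_of m n A b w s.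

(* U is a function of the first k coordinates only (it is a function on R^k) *)
Definition depends_on_first (k : nat) (U : vec -> R) : Prop :=
  forall s t, (forall i, (i < k)%nat -> s i = t i) -> U s = U t.

Definition concave_on_pos (k : nat) (U : vec -> R) : Prop :=
  forall s t (l : R), posvec k s -> posvec k t -> 0 <= l <= 1 ->
    l * U s + (1 - l) * U t <= U (fun i => l * s i + (1 - l) * t i).

Definition supergradient (k : nat) (U : vec -> R) (s0 g : vec) : Prop :=
  forall s, posvec k s -> U s <= U s0 + dot k g (fun i => s i - s0 i).

Definition dscale (d s : vec) : vec := fun i => d i * s i.
Definition dscale_inv (d s : vec) : vec := fun i => s i / d i.

Definition NDAS (k : nat) (f : vec -> R) : Prop :=
  forall d, posvec k d ->
    (forall s, posvec k s -> f s <= Rmax (f (dscale d s)) (f (dscale_inv d s))) /\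
    ((exists s0, posvec k s0 /\ f s0 <= f (dscale d s0)) ->
       forall s, posvec k s -> f s <= f (dscale d s)).

(* Main.v *)
Require Import Defs.
From Stdlib Require Import Reals Lra Lia.
Open Scope R_scope.

Lemma sumR_ext k f g : (forall i, (i < k)%nat -> f i = g i) -> sumR k f = sumR k g.
Proof.
  induction k; simpl; intros H; auto.
  rewrite IHk by (intros; apply H; lia). rewrite H by lia. reflexivity.
Qed.

Lemma sumR_plus k f g : sumR k (fun i => f i + g i) = sumR k f + sumR k g.
Proof. induction k; simpl; [lra|rewrite IHk; lra]. Qed.

Lemma sumR_scal k c f : sumR k (fun i => c * f i) = c * sumR k f.
Proof. induction k; simpl; [lra|rewrite IHk; lra]. Qed.

Lemma sumR_swap m n (f : nat -> nat -> R) :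
  sumR m (fun i => sumR n (fun j => f i j)) = sumR n (fun j => sumR m (fun i => f i j)).
Proof.
  induction m; simpl.
  - induction n; simpl; lra.
  - rewrite IHm. rewrite <- sumR_plus. reflexivity.
Qed.

Lemma key m n A b x s y :
  (forall i, (i < m)%nat -> matvec n A x i + s i = b i) ->
  (forall j, (j < n)%nat -> tmatvec m A y j = 0) ->
  sumR m (fun i => s i * y i) = sumR m (fun i => b i * y i).
Proof.
  intros H1 H2.
  assert (E : sumR m (fun i => s i * y i) =
    sumR m (fun i => b i * y i) + (-1) * sumR m (fun i => matvec n A x i * y i)).
  { rewrite <- sumR_scal, <- sumR_plus. apply sumR_ext. intros i Hi.
    rewrite <- (H1 i Hi). ring. }
  assert (Z : sumR m (fun i => matvec n A x i * y i) = 0).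
  { unfold matvec.
    transitivity (sumR m (fun i => sumR n (fun j => A i j * x j * y i))).
    { apply sumR_ext; intros i _. rewrite Rmult_comm, <- sumR_scal.
      apply sumR_ext; intros; ring. }
    rewrite sumR_swap.
    transitivity (sumR n (fun j => x j * tmatvec m A y j)).
    { apply sumR_ext; intros j _. unfold tmatvec. rewrite <- sumR_scal.
      apply sumR_ext; intros; ring. }
    transitivity (sumR n (fun j => 0 * 0)).
    { apply sumR_ext; intros j Hj. rewrite H2 by auto. ring. }
    clear. induction n; simpl; lra. }
  rewrite E, Z; ring.
Qed.

Lemma ypos m n A b w x y s : inW m w -> weighted_center m n A b w x y s ->
  posvec m y.
Proof.
  intros [Hw _] (_ & Hs & _ & Hsy) i Hi.
  specialize (Hw i Hi). specialize (Hs i Hi). rewrite <- (Hsy i Hi) in Hw.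
  destruct (Rlt_le_dec 0 (y i)) as [h|h]; auto.
  assert (s i * y i <= 0). { nra. } lra.
Qed.

Lemma inWs_of m n A b sopt w x y s :
  centric m n A b sopt -> inW m w -> weighted_center m n A b w x y s ->
  inWs m n A b sopt (fun i => sopt i * y i).
Proof.
  intros [w' [_ [xo [yo (Ho1 & Ho2 & _ & _)]]]] Hw Hc.
  pose proof (ypos _ _ _ _ _ _ _ _ Hw Hc) as Hy.
  destruct Hc as (H1 & H2 & H3 & H4).
  split; [split|].
  - intros i Hi. apply Rmult_lt_0_compat; auto.
  - rewrite (key m n A b xo sopt y Ho1 H3), <- (key m n A b x s y H1 H3).
    destruct Hw as [_ Hw]. rewrite <- Hw. apply sumR_ext. auto.
  - exists xo, y. repeat split; auto.
Qed.

Lemma dot_eq m g y y' s sopt :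
  posvec m y -> posvec m y' ->
  dot m (fun i => g i / y i) (fun i => sopt i * y' i - s i * y i)
  = dot m g (fun i => sopt i * y' i / y i - s i).
Proof.
  intros Hy Hy'. unfold dot. apply sumR_ext. intros i Hi.
  specialize (Hy i Hi). field. lra.
Qed.

Theorem proposition3p1
  (m n : nat) (A : mat) (b : vec)
  (Hnm : (n <= m)%nat)
  (Hrank : full_column_rank m n A)
  (Hbdd : poly_bounded m n A b)
  (Hint : poly_nonempty_interior m n A b)
  (U : vec -> R)
  (HUfun : depends_on_first m U)
  (HUconc : concave_on_pos m U)
  (HUndas : NDAS m U)
  (sopt : vec)
  (Hsopt : centric m n A b sopt /\
           forall s, centric m n A b s -> U s <= U sopt)
  (w0 w1 x0 y0 s0 x1 y1 s1 g0 g1 : vec)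
  (Hw0 : inW m w0) (Hw1 : inW m w1)
  (Hc0 : weighted_center m n A b w0 x0 y0 s0)
  (Hc1 : weighted_center m n A b w1 x1 y1 s1)
  (Hg0 : supergradient m U s0 g0)
  (Hg1 : supergradient m U s1 g1) :
  let g0w := fun i => g0 i / y0 i in
  let g1w := fun i => g1 i / y1 i in
  exists w : vec,
    dot m g0w (fun i => w i - w0 i) >= 0 /\
    dot m g1w (fun i => w i - w1 i) >= 0 /\
    inWs m n A b sopt w.
Proof.
  intros g0w g1w.
  destruct Hsopt as [Hcs Hmax].
  pose proof (ypos _ _ _ _ _ _ _ _ Hw0 Hc0) as Hy0.
  pose proof (ypos _ _ _ _ _ _ _ _ Hw1 Hc1) as Hy1.
  assert (U0 : U s0 <= U sopt).
  { apply Hmax. exists w0. split; auto. exists x0, y0. auto. }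
  assert (U1 : U s1 <= U sopt).
  { apply Hmax. exists w1. split; auto. exists x1, y1. auto. }
  assert (Hsp : posvec m sopt).
  { destruct Hcs as [? [_ [? [? (_ & H & _)]]]]. exact H. }
  set (d := fun i => y0 i / y1 i).
  assert (Hd : posvec m d).
  { intros i Hi. unfold d. apply Rdiv_lt_0_compat; auto. }
  assert (Ew0 : forall i, (i < m)%nat -> w0 i = s0 i * y0 i).
  { destruct Hc0 as (_ & _ & _ & H). intros i Hi; rewrite H; auto. }
  assert (Ew1 : forall i, (i < m)%nat -> w1 i = s1 i * y1 i).
  { destruct Hc1 as (_ & _ & _ & H). intros i Hi; rewrite H; auto. }
  assert (dotw : forall g y w s y', posvec m y -> posvec m y' ->
     (forall i, (i < m)%nat -> w i = s i * y i) ->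
     dot m (fun i => g i / y i) (fun i => sopt i * y' i - w i)
     = dot m g (fun i => sopt i * y' i / y i - s i)).
  { intros g y w s y' Hy Hy' Ew. rewrite <- dot_eq by auto.
    unfold dot. apply sumR_ext. intros i Hi. rewrite Ew; auto. }
  destruct (HUndas d Hd) as [N1 _].
  pose proof (N1 sopt Hsp) as N.
  assert (PD : posvec m (dscale d sopt)).
  { intros i Hi. unfold dscale. apply Rmult_lt_0_compat; auto. }
  assert (PDi : posvec m (dscale_inv d sopt)).
  { intros i Hi. unfold dscale_inv. apply Rdiv_lt_0_compat; auto. }
  unfold Rmax in N. destruct (Rle_dec _ _) as [Hle|Hle].
  - (* U sopt <= U (dscale_inv d sopt) : use y1 *)
    exists (fun i => sopt i * y1 i). split; [|split].
    + unfold g0w. rewrite (dotw g0 y0 w0 s0 y1) by auto.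
      pose proof (Hg0 _ PDi) as G.
      replace (dot m g0 (fun i => sopt i * y1 i / y0 i - s0 i))
        with (dot m g0 (fun i => dscale_inv d sopt i - s0 i)).
      2:{ unfold dot; apply sumR_ext; intros i Hi. unfold dscale_inv, d.
          specialize (Hy0 i Hi); specialize (Hy1 i Hi). field. lra. }
      lra.
    + unfold g1w. rewrite (dotw g1 y1 w1 s1 y1) by auto.
      pose proof (Hg1 _ Hsp) as G.
      replace (dot m g1 (fun i => sopt i * y1 i / y1 i - s1 i))
        with (dot m g1 (fun i => sopt i - s1 i)).
      2:{ unfold dot; apply sumR_ext; intros i Hi.
          specialize (Hy1 i Hi). field. lra. }
      lra.
    + apply (inWs_of m n A b sopt w1 x1 y1 s1); auto.
  - exists (fun i => sopt i * y0 i). split; [|split].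
    + unfold g0w. rewrite (dotw g0 y0 w0 s0 y0) by auto.
      pose proof (Hg0 _ Hsp) as G.
      replace (dot m g0 (fun i => sopt i * y0 i / y0 i - s0 i))
        with (dot m g0 (fun i => sopt i - s0 i)).
      2:{ unfold dot; apply sumR_ext; intros i Hi.
          specialize (Hy0 i Hi). field. lra. }
      lra.
    + unfold g1w. rewrite (dotw g1 y1 w1 s1 y0) by auto.
      pose proof (Hg1 _ PD) as G.
      replace (dot m g1 (fun i => sopt i * y0 i / y1 i - s1 i))
        with (dot m g1 (fun i => dscale d sopt i - s1 i)).
      2:{ unfold dot; apply sumR_ext; intros i Hi. unfold dscale, d.
          specialize (Hy0 i Hi); specialize (Hy1 i Hi). field. lra. }
      lra.
    + apply (inWs_of m n A b sopt w0 x0 y0 s0); auto.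
Qed.
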